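(* Let $\lambda$ be a positive, increasing, smooth function on $[0,\infty)$ such that $\liminf_{x\to\infty}S(x,\lambda)>0$. Let $g$ be a positive differentiable function on $(0,\infty)$ such that $X\mapsto\log g(e^X)$ is convex and \[ \int_0^\infty g(x)\,\lambda(x)^{-1}\,dx<\infty . \] Then $\lim_{x\to\infty}g(x)\lambda(x)^{-1}=0$.
   Context: For a positive increasing smooth function $\lambda$ and $x_0>0$ in its domain, \[ S(x_0,\lambda)=\int_{x_0}^\infty\frac{\lambda(x_0)}{\lambda(x)}\left(\frac{x}{x_0}\right)^{x_0\lambda'(x_0)/\lambda(x_0)}dx . \] *)

(* Defs.v *)
From HB Require Import structures.
From mathcomp Require Import all_boot all_order all_algebra.
From mathcomp Require Import all_classical all_reals all_analysis.
Set Implicit Arguments. Unset Strict Implicit. Unset Printing Implicit Defensive.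
Import Order.TTheory GRing.Theory Num.Theory.
Import numFieldNormedType.Exports.
Local Open Scope classical_set_scope.
Local Open Scope ring_scope.

Definition S_fun (R : realType) (x0 : R) (lam : R -> R) : \bar R :=
  (\int[@lebesgue_measure R]_(x in `[x0, +oo[)
     ((lam x0 / lam x) * (x / x0) `^ (x0 * derive1 lam x0 / lam x0))%:E)%E.

Definition iter_deriv (R : realType) (n : nat) (f : R -> R) : R -> R :=
  iter n (fun h => derive1 h) f.

(* Main.v *)
Require Import Defs.
From HB Require Import structures.
From mathcomp Require Import ring lra.
From mathcomp Require Import measurable_realfun.
From mathcomp Require Import all_boot all_order all_algebra.
From mathcomp Require Import all_classical all_reals all_analysis.
Import Order.TTheory GRing.Theory Num.Theory.
Import numFieldNormedType.Exports.
Local Open Scope classical_set_scope.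
Local Open Scope ring_scope.
Lemma convex_tangent (R : realType) (h : R -> R) (c s y : R) :
  convex_function (setT : set R) h -> is_derive c 1 h s ->
  h c + s * (y - c) <= h y.
Proof.
move=> hcvx [dh hs].
set v := y - c.
have dif : differentiable h c by apply/derivable1_diffP.
have dv : derivable h c v by exact: diff_derivable.
have Dv : 'D_v h c = s * v.
  by rewrite (deriveE _ dif) (deriv1E dh) derive1E hs mulrC.
rewrite -lerBrDl -Dv.
rewrite ['D_v h c](cvg_at_rightE _ _ dv).
apply: limr_le.
  rewrite -(cvg_at_rightE _ _ dv).
  apply: cvg_trans dv; apply: cvg_app.
  move=> A [e egt0 Ae]; exists e => // x xe xgt0; apply: Ae => //.
  exact/lt0r_neq0.
near=> t.
have t0 : 0 < t by near: t; exists 1 => //= u _; done.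
have t1 : t < 1.
  near: t; exists 1 => //= u + _; rewrite /ball_ /= sub0r normrN; exact/le_lt_trans/ler_norm.
have := hcvx (Itv01 (ltW t0) (ltW t1)) y c (in_setT _) (in_setT _).
rewrite [X in _ <= X]convRE /= /unstable.onem.
move=> hle0.
have hle : h (t * y + (1 - t) * c) <= t * h y + (1 - t) * h c := hle0.
have -> : t^-1 *: ((h \o shift c) (t *: v) - h c) = t^-1 * (h (t * v + c) - h c) by [].
rewrite ler_pdivrMl //.
have -> : t * v + c = t * y + (1 - t) * c by rewrite /v; ring.
lra.
Unshelve. all: by end_near.
Qed.
Lemma g_tangent (R : realType) (g : R -> R) (x0 x : R) :
  0 < x0 -> 0 < x -> (forall x, 0 < x -> 0 < g x) ->
  (forall x, 0 < x -> derivable g x 1) ->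
  convex_function (setT : set R) (fun X => ln (g (expR X))) ->
  g x0 * (x / x0) `^ (x0 * derive1 g x0 / g x0) <= g x.
Proof.
move=> x00 x0' gpos gder hcvx.
set b := x0 * derive1 g x0 / g x0.
have gx0 := gpos _ x00.
have dH : is_derive (ln x0) 1 (fun X => ln (g (expR X))) b.
  have e1 : expR (ln x0) = x0 by rewrite lnK // posrE.
  have dg : is_derive (expR (ln x0)) 1 g (derive1 g x0).
    by rewrite e1 derive1E; apply: derivableP; exact: gder.
  have dge := is_derive1_comp dg (is_derive_expR (ln x0)).
  have dl : is_derive ((g \o expR) (ln x0)) 1 (@ln R) ((g x0)^-1).
    by rewrite /= e1; apply: is_derive1_ln.
  have := is_derive1_comp dl dge.
  move=> D; apply: is_derive_eq D _; rewrite e1 /b; field; exact: lt0r_neq0.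
have := @convex_tangent R _ _ _ (ln x) hcvx dH.
rewrite lnK ?posrE // => hle.
rewrite -(lnK (gpos _ x0')) -[X in X * _](lnK gx0) /powR.
rewrite gt_eqF ?divr_gt0 // -expRD ler_expR.
rewrite lnM ?posrE ?invr_gt0 // lnV ?posrE //.
by rewrite lnK ?posrE in hle.
Qed.

Lemma crit_eq (R : realType) (g lam : R -> R) (m : R) :
  0 < g m -> 0 < lam m -> derivable g m 1 -> derivable lam m 1 ->
  is_derive m 1 (fun x => g x / lam x) 0 ->
  derive1 g m / g m = derive1 lam m / lam m.
Proof.
move=> gm lm dg dl [_ D0].
have dV := is_deriveV (lt0r_neq0 lm) (derivableP dl).
have dM := is_deriveM (derivableP dg) dV.
have e : 'D_1 (fun x => g x / lam x) m = g m *: (- (lam m) ^- 2 *: 'D_1 lam m) + (lam m)^-1 *: 'D_1 g m.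
  by case: dM.
rewrite D0 in e.
rewrite !derive1E.
move: e; rewrite /= => e.
have gm0 := lt0r_neq0 gm; have lm0 := lt0r_neq0 lm.
apply: (@mulIf _ (g m * lam m)); first by rewrite mulf_neq0.
have -> : 'D_1 g m / g m * (g m * lam m) = 'D_1 g m * lam m by field.
have -> : 'D_1 lam m / lam m * (g m * lam m) = 'D_1 lam m * g m by field.
apply/eqP; rewrite -subr_eq0; apply/eqP.
apply: (@mulIf _ ((lam m)^-2)); first by rewrite invr_eq0 expf_neq0.
have e' : 0 = g m * (- lam m ^- 2 * 'D_1 lam m) + (lam m)^-1 * 'D_1 g m := e.
by rewrite mul0r e'; field.
Qed.
Lemma k_der (R : realType) (lam : R -> R) m a x : 0 < x -> 0 < m -> 0 < lam x -> derivable lam x 1 ->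
  derivable (fun x => lam m / lam x * (x / m) `^ a) x 1.
Proof.
move=> x0 m0 l0 dl.
apply: (@derivableM _ _ (fun y => lam m / lam y) (fun y => (y / m) `^ a)).
  apply: (@derivableM _ _ (fun y => lam m) (fun y => (lam y)^-1)); first exact: derivable_cst.
  by apply: derivableV => //; exact: lt0r_neq0.
have := @is_derive1_comp R (fun y => y `^ a) (fun y => y / m) x _ _ (is_derive1_powR a (divr_gt0 x0 m0)) (is_deriveM (is_derive_id x 1) (is_derive_cst (m^-1) x 1)).
by case.
Qed.
Lemma meas_itv (R : realType) (f : R -> R) (m : R) : 0 < m ->
  (forall x, m <= x -> derivable f x 1) -> measurable_fun `[m, +oo[ (EFin \o f).
Proof.
move=> m0 df; apply/measurable_EFinP.
apply: subspace_continuous_measurable_fun => //.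
apply: continuous_in_subspaceT => x; rewrite inE /= in_itv /= andbT => mx.
exact/differentiable_continuous/derivable1_diffP/df.
Qed.

Lemma key (R : realType) (lam g : R -> R) (m : R) :
  0 < m ->
  (forall x, 0 <= x -> 0 < lam x) ->
  (forall x, 0 < x -> derivable lam x 1) ->
  (forall x, 0 < x -> 0 < g x) ->
  (forall x, 0 < x -> derivable g x 1) ->
  convex_function (setT : set R) (fun X => ln (g (expR X))) ->
  derive1 g m / g m = derive1 lam m / lam m ->
  ((g m / lam m)%:E * S_fun m lam <=
     \int[@lebesgue_measure R]_(x in `[m, +oo[) (g x / lam x)%:E)%E.
Proof.
move=> m0 lpos ldr gpos gdr hcvx eq.
have pos x : m <= x -> 0 < x by move=> mx; exact: lt_le_trans mx.
have lp x : m <= x -> 0 < lam x by move=> /pos/ltW; exact: lpos.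
rewrite /S_fun.
set a := m * derive1 lam m / lam m.
have mk : measurable_fun `[m, +oo[ (EFin \o (fun x => lam m / lam x * (x / m) `^ a)).
  apply: (@meas_itv R _ m m0) => x mx; apply: k_der => //; [exact: pos|exact: lp|exact/ldr/pos].
rewrite -ge0_integralZl //; last 2 first.
- move=> x; rewrite /= in_itv /= andbT => mx; rewrite lee_fin.
  by rewrite mulr_ge0 ?powR_ge0 // divr_ge0 // ltW // lp.
- by rewrite lee_fin divr_ge0 // ltW // ?gpos ?lp.
apply: ge0_le_integral => //.
- move=> x; rewrite /= in_itv /= andbT => mx; rewrite lee_fin.
  apply: mulr_ge0; [apply: divr_ge0; apply: ltW; [exact: gpos|exact: lp]| apply: mulr_ge0; [apply: divr_ge0; apply: ltW; exact: lp | exact: powR_ge0]].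
- have : measurable_fun `[m, +oo[
      (EFin \o (fun x => g m / lam m * (lam m / lam x * (x / m) `^ a))).
    apply: (@meas_itv R _ m m0) => x mx.
    apply: (@derivableM _ _ (fun=> g m / lam m) (fun x => lam m / lam x * (x / m) `^ a)).
      exact: derivable_cst.
    apply: k_der => //; [exact: pos|exact: lp|exact/ldr/pos].
  by apply: eq_measurable_fun => x _ /=; rewrite EFinM.
- apply: (@meas_itv R _ m m0) => x mx.
  apply: (@derivableM _ _ g (fun x => (lam x)^-1)); first exact/gdr/pos.
  by apply: derivableV; [exact/lt0r_neq0/lp|exact/ldr/pos].
- move=> x; rewrite /= in_itv /= andbT => mx.
  rewrite -EFinM lee_fin.
  have ea : m * derive1 g m / g m = a by rewrite /a -!mulrA eq.
  have := @g_tangent R g m x m0 (pos x mx) gpos gdr hcvx; rewrite ea => ht.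
  have lm := lp m (lexx m); have lx := lp x mx.
  rewrite (_ : g m / lam m * (lam m / lam x * (x / m) `^ a) = g m * (x / m) `^ a / lam x); last first.
    by field; apply/andP; split; exact: lt0r_neq0.
  by apply: ler_wpM2r => //; rewrite invr_ge0 ltW.
Qed.

Lemma tail (R : realType) (f : R -> R) :
  (forall x, 0 < x -> 0 <= f x) ->
  measurable_fun (`]0, +oo[ : set R) (EFin \o f) ->
  (\int[@lebesgue_measure R]_(y in `]0%R, +oo[) (f y)%:E < +oo)%E ->
  forall k, 0 < k -> exists N, 0 < N /\ forall x, N <= x ->
    (\int[@lebesgue_measure R]_(y in `[x, +oo[) (f y)%:E < k%:E)%E.
Proof.
move=> f0 mf fin k k0.
set mu := @lebesgue_measure R.
pose F (n : nat) : set R := `]0, n%:R]%classic.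
have mF n : measurable (F n) by exact: measurable_itv.
have FS n : F n `<=` `]0, +oo[.
  by move=> y; rewrite /F /= !in_itv /= andbT => /andP[].
have mfF n : measurable_fun (F n) (EFin \o f) by exact: measurable_funS mf.
have f0F n y : F n y -> (0 <= (EFin \o f) y)%E.
  by move=> /FS; rewrite /= in_itv /= andbT lee_fin => /f0.
have nd : nondecreasing_seq F.
  apply/nondecreasing_seqP => n; rewrite subsetEset => y.
  rewrite /F /= !in_itv /= => /andP[-> yn] /=.
  by rewrite (le_trans yn) // ler_nat.
have cv := ge0_nondecreasing_set_cvg_integral nd mF mfF f0F (mu := mu).
have eqU : \bigcup_n F n = `]0, +oo[%classic.
  apply/seteqP; split => y.
    by move=> [n _] /FS.
  rewrite /= in_itv /= andbT => y0.
  exists (Num.bound y) => //.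
  by rewrite /F /= in_itv /= y0 /= ltW // archi_boundP // ltW.
rewrite eqU in cv.
have nd2 := ge0_nondecreasing_set_nondecreasing_integral mu nd mF mfF f0F.
have eS := cvg_lim (@ereal_hausdorff R) (ereal_nondecreasing_cvgn nd2).
rewrite (cvg_lim (@ereal_hausdorff R) cv) in eS.
have {}eS := eS eventually_filter.
set I := (\int[mu]_(x in `]0%R, +oo[) (EFin \o f) x)%E in eS.
have I0 : (0 <= I)%E.
  by apply: integral_ge0 => y; rewrite /= in_itv /= andbT lee_fin => /f0.
have [r Ir] : exists r, I = r%:E.
  have fin' : (I < +oo)%E := fin.
  by move: I0 fin'; case: (I) => [r'| |] //= _ _; exists r'.
have : ((r - k)%:E < I)%E by rewrite Ir lte_fin ltrBlDr ltrDl.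
rewrite eS => /ereal_sup_gt [_ [n _ <-]] hn.
exists (n%:R + 1); split; first by rewrite ltr_wpDl.
move=> x Nx.
have x0 : 0 < x by apply: lt_le_trans Nx; rewrite ltr_wpDl.
have dj : [disjoint F n & `[x, +oo[%classic].
  apply/disj_set2P; apply/seteqP; split => // y [].
  rewrite /F /= !in_itv /= andbT => /andP[_ yn] xy.
  have : x <= n%:R by apply: le_trans xy yn.
  by rewrite leNgt (lt_le_trans _ Nx) // ltrDl.
have sU : F n `|` `[x, +oo[%classic `<=` `]0, +oo[%classic.
  move=> y [/FS //|]; rewrite /= !in_itv /= !andbT => xy.
  exact: lt_le_trans xy.
have mU : measurable (F n `|` `[x, +oo[%classic).
  by apply: measurableU => //; exact: measurable_itv.
have f0U : forall y, (F n `|` `[x, +oo[%classic) y -> (0 <= (EFin \o f) y)%E.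
  by move=> y /sU; rewrite /= in_itv /= andbT lee_fin => /f0.
have hU := ge0_integral_setU mu (mF n) (measurable_itv `[x, +oo[)
  (measurable_funS (measurable_itv _) sU mf)
  f0U dj.
have f0I : forall y, `]0%R, +oo[%classic y -> (0 <= (EFin \o f) y)%E.
  by move=> y; rewrite /= in_itv /= andbT lee_fin => /f0.
have hS := ge0_subset_integral mu mU (measurable_itv `]0%R, +oo[) mf f0I sU.
rewrite hU -/I Ir in hS.
change (\int[mu]_(y in `[x, +oo[) (EFin \o f) y < k%:E)%E.
have B0 : (0 <= \int[mu]_(y in `[x, +oo[) (EFin \o f) y)%E.
  by apply: integral_ge0 => y /= xy; apply: f0U; right.
move: hn hS B0.
case: (\int[mu]_(x in F n) (EFin \o f) x)%E => [a| |];
  case: (\int[mu]_(y in `[x, +oo[) (EFin \o f) y)%E => [b| |] //=.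
by rewrite !lte_fin -EFinD !lee_fin; lra.
Qed.

Lemma small (R : realType) (f : R -> R) :
  (forall x, 0 < x -> 0 <= f x) ->
  measurable_fun (`]0, +oo[ : set R) (EFin \o f) ->
  (\int[@lebesgue_measure R]_(y in `]0%R, +oo[) (f y)%:E < +oo)%E ->
  forall d, 0 < d -> forall M, exists p, M < p /\ f p < d.
Proof.
move=> f0 mf fin d d0 M.
have [N [N0 hN]] := @tail R f f0 mf fin 1 ltr01.
have [//|H] := pselect (exists p, M < p /\ f p < d).
exfalso.
set P := Num.max (M + 1) N.
have NP : N <= P by rewrite le_max lexx orbT.
have MP : M < P by rewrite lt_max ltrDl ltr01.
have P0 : 0 < P by exact: lt_le_trans NP.
have := hN P NP.
have mP : measurable (`[P, +oo[%classic : set R) by exact: measurable_itv.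
have sP : (`[P, +oo[%classic : set R) `<=` `]0, +oo[%classic.
  by move=> y; rewrite /= !in_itv /= !andbT => Py; exact: lt_le_trans Py.
have : (\int[@lebesgue_measure R]_(y in `[P, +oo[) (cst d%:E) y <=
        \int[@lebesgue_measure R]_(y in `[P, +oo[) (EFin \o f) y)%E.
  apply: ge0_le_integral => //.
  - by move=> y _; rewrite lee_fin ltW.
  - exact: measurable_funS mf.
  - move=> y; rewrite /= in_itv /= andbT => Py; rewrite lee_fin.
    rewrite leNgt; apply/negP => fy; apply: H; exists y; split => //.
    exact: lt_le_trans Py.
rewrite integral_cst // => H1.
have e : (lebesgue_measure (`[P, +oo[%classic : set R) = +oo)%E.
  by rewrite lebesgue_measure_itv /= ltry addye.
rewrite -[X in (d%:E * X)%E]/(lebesgue_measure (`[P, +oo[%classic : set R)) e gt0_muley ?lte_fin // in H1.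
move=> H2; have := le_lt_trans H1 H2.
by rewrite ltNge leey.
Qed.

Lemma Slow (R : realType) (S : R -> \bar R) :
  (0 < limf_einf S +oo%R)%E ->
  exists c M, 0 < c /\ forall x, M < x -> (c%:E <= S x)%E.
Proof.
move=> h; rewrite limf_einfE in h.
have [_ [V hV <-] hy] := ereal_sup_gt h.
have [M [_ HM]] := hV.
have ley x : M < x -> (ereal_inf [set S x | x in V] <= S x)%E.
  move=> Mx; apply: ge_ereal_inf; exists (S x) => //; exists x => //.
  exact: HM.
move: hy ley; case: (ereal_inf [set S x | x in V]) => [r| |] // r0 ley.
- by exists r, M; split; [rewrite -lte_fin|].
- exists 1, M; split => // x Mx; have := ley x Mx.
  by rewrite leye_eq => /eqP ->; rewrite leey.
Qed.

Theorem theorem4p2 (R : realType) (lam g : R -> R) :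
  (* lambda positive and increasing on [0, oo) *)
  (forall x, 0 <= x -> 0 < lam x) ->
  (forall x y, 0 <= x -> x <= y -> lam x <= lam y) ->
  (* lambda smooth: derivatives of all orders exist on (0, oo) *)
  (forall n x, 0 < x -> derivable (iter_deriv n lam) x 1) ->
  (* liminf_{x -> oo} S(x, lambda) > 0 *)
  (0 < limf_einf (fun x => S_fun x lam) +oo%R)%E ->
  (* g positive and differentiable on (0, oo) *)
  (forall x, 0 < x -> 0 < g x) ->
  (forall x, 0 < x -> derivable g x 1) ->
  (* X |-> log g(e^X) is convex on R *)
  convex_function (setT : set R) (fun X => ln (g (expR X))) ->
  (* \int_0^oo g / lambda < oo *)
  (\int[@lebesgue_measure R]_(x in `]0%R, +oo[) (g x / lam x)%:E < +oo)%E ->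
  (fun x => g x / lam x) @ +oo --> 0.
Proof.
move=> lpos lmono lsmooth hS gpos gdr hcvx hint.
have ldr : forall x, 0 < x -> derivable lam x 1 := fun x hx => lsmooth 0%N x hx.
pose phi := fun x => g x / lam x.
have lp x : 0 < x -> 0 < lam x by move=> /ltW; exact: lpos.
have phipos x : 0 < x -> 0 < phi x by move=> x0; rewrite /phi divr_gt0 // ?gpos ?lp.
have phi0 x : 0 < x -> 0 <= phi x by move=> /phipos /ltW.
have phidr x : 0 < x -> derivable phi x 1.
  move=> x0; apply: (@derivableM _ _ g (fun x => (lam x)^-1)); first exact: gdr.
  by apply: derivableV; [exact/lt0r_neq0/lp|exact: ldr].
have mphi : measurable_fun (`]0, +oo[ : set R) (EFin \o phi).
  apply/measurable_EFinP; apply: open_continuous_measurable_fun; first exact: interval_open.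
  move=> x; rewrite inE /= in_itv /= andbT => x0.
  exact/differentiable_continuous/derivable1_diffP/phidr.
have [c [M0 [c0 hc]]] := @Slow R _ hS.
apply/cvgrPdist_lt => e e0.
have [//|H] := pselect (\forall t \near +oo, `|0 - g t / lam t| < e).
exfalso.
have big : forall M, 0 <= M -> exists x, M < x /\ e <= phi x.
  move=> M M0'; apply: contrapT => nx; apply: H.
  exists M; split; first exact: num_real.
  move=> x Mx; have x0 : 0 < x by exact: le_lt_trans Mx.
  rewrite sub0r normrN ger0_norm; last exact: phi0.
  rewrite ltNge; apply/negP => ex; apply: nx; exists x; split => //.
have [N [N0 hN]] := @tail R phi phi0 mphi hint (e * c) (mulr_gt0 e0 c0).
have e20 : 0 < e / 2 by rewrite divr_gt0.
have e2e : e / 2 < e by rewrite ltr_pdivrMr // ltr_pMr // ltr1n.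
set K := Num.max N (Num.max M0 1).
have K1 : 1 <= K by rewrite !le_max lexx !orbT.
have [p [Kp pd]] := @small R phi phi0 mphi hint (e / 2) e20 K.
have p0 : 0 < p by apply: (lt_trans _ Kp); exact: (lt_le_trans ltr01 K1).
have [x [px ex]] := big p (ltW p0).
have [q [xq qd]] := @small R phi phi0 mphi hint (e / 2) e20 x.
have pq : p <= q by apply: ltW; exact: lt_trans xq.
have pos t : p <= t -> 0 < t by move=> pt; exact: lt_le_trans pt.
have cont : {within `[p, q], continuous phi}.
  apply: derivable_within_continuous => t; rewrite in_itv /= => /andP[pt _].
  exact/phidr/pos.
have [m mpq mmax] := EVT_max pq cont.
have xin : x \in `[p, q] by rewrite in_itv /= !ltW.
have em : e <= phi m := le_trans ex (mmax x xin).
have pm : p < m.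
  rewrite lt_neqAle (itvP mpq) andbT; apply/eqP => pe; subst m.
  by move: (lt_trans pd e2e); rewrite ltNge em.
have mq : m < q.
  rewrite lt_neqAle (itvP mpq) andbT; apply/eqP => qe; subst m.
  by move: (lt_trans qd e2e); rewrite ltNge em.
have m0 : 0 < m by exact: pos (ltW pm).
have mo : m \in `]p, q[ by rewrite in_itv /= pm mq.
have ioc t : t \in `]p, q[ -> p <= t by rewrite in_itv /= => /andP[/ltW].
have dm := derive1_at_max pq (fun t ht => phidr t (pos t (ioc t ht)))
  mo (fun t ht => mmax t (subset_itv_oo_cc ht)).
have ceq := @crit_eq R g lam m (gpos m m0) (lp m m0) (gdr m m0) (ldr m m0) dm.
have hk := @key R lam g m m0 lpos ldr gpos gdr hcvx ceq.
have Km : K < m by exact: lt_trans Kp pm.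
have Mm : M0 < m by apply: le_lt_trans Km; rewrite !le_max lexx !orbT.
have Nm : N <= m by apply: ltW; apply: le_lt_trans Km; rewrite !le_max lexx.
have Sm := hc m Mm.
have Tm := hN m Nm.
have h1 : ((e * c)%:E <= (phi m)%:E * S_fun m lam)%E.
  apply: le_trans (lee_wpmul2l _ Sm); last by rewrite lee_fin phi0.
  by rewrite -EFinM lee_fin ler_wpM2r // ltW.
have := le_lt_trans (le_trans h1 hk) Tm.
by rewrite ltxx.
Qed.
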